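(* Let $p_1,\dots,p_m\in\mathbb R$, let $\sigma$ be any permutation with $p_{\sigma(1)}\le\dots\le p_{\sigma(m)}$, $p_{(k)}=p_{\sigma(k)}$, $R_k=\{\sigma(1),\dots,\sigma(k)\}$, $R_k^\dagger=\{i:p_i\le p_{(k)}\}$, and let $f:\mathbb R\to\mathbb R$ be any function. Consider the reference families $\mathfrak R=(R_k,f(p_{(k)})\wedge k)_{1\le k\le m}$, $\mathfrak R^\sim=(R_k,f(p_{(k)}))_{1\le k\le m}$ and $\mathfrak R^\dagger=(R_k^\dagger,f(p_{(k)}))_{1\le k\le m}$. Then for all $S\subseteq\{1,\dots,m\}$, $$\hat V^{\mathrm{JER}}_{\mathfrak R}(S)=\hat V^{\mathrm{JER}}_{\mathfrak R^\sim}(S)=\hat V^{\mathrm{JER}}_{\mathfrak R^\dagger}(S).$$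
   Context: For a reference family $\mathfrak R=(R_k,\zeta_k)_{k\in\mathcal K}$ (subsets $R_k\subseteq\{1,\dots,m\}$, reals $\zeta_k$): $\mathfrak A(\mathfrak R)=\{A\subseteq\{1,\dots,m\}:\forall k\in\mathcal K,\ |R_k\cap A|\le\zeta_k\}$ and $\hat V^{\mathrm{JER}}_{\mathfrak R}(S)=\max_{A\in\mathfrak A(\mathfrak R)}|S\cap A|$ (the statement is understood with any fixed convention for the maximum over an empty set). *)

(* Defs.v *)
From mathcomp Require Import all_boot all_order all_algebra all_fingroup.
Set Implicit Arguments. Unset Strict Implicit. Unset Printing Implicit Defensive.
Import Order.TTheory GRing.Theory Num.Theory.
Local Open Scope ring_scope.

(* Indices {1,...,m} are represented by 'I_m (i.e. {0,...,m-1}). *)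

Definition JER_adm (R : realFieldType) (m : nat) (K : finType)
  (Rk : K -> {set 'I_m}) (zeta : K -> R) : {set {set 'I_m}} :=
  [set A : {set 'I_m} | [forall k : K, (#|Rk k :&: A|%:R <= zeta k)]].

(* V^JER_R(S) = max_{A in A(R)} |S cap A|; convention: max over empty set = 0. *)
Definition V_JER (R : realFieldType) (m : nat) (K : finType)
  (Rk : K -> {set 'I_m}) (zeta : K -> R) (S : {set 'I_m}) : nat :=
  \max_(A in JER_adm Rk zeta) #|S :&: A|.

(* R_k = {sigma(1),...,sigma(k)}; with 0-based index k : 'I_m this is
   {sigma j | j <= k}. *)
Definition Rsorted (m : nat) (sigma : 'S_m) (k : 'I_m) : {set 'I_m} :=
  [set sigma j | j in [set j : 'I_m | (j <= k)%N]].

Definition Rdagger (R : realFieldType) (m : nat) (p : 'I_m -> R) (sigma : 'S_m)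
  (k : 'I_m) : {set 'I_m} :=
  [set i : 'I_m | p i <= p (sigma k)].

(* Main.v *)
Require Import Defs.
From mathcomp Require Import all_boot all_order all_algebra all_fingroup.
Import Order.TTheory GRing.Theory Num.Theory.
Local Open Scope ring_scope.

Lemma card_Rsorted_le (m : nat) (sigma : 'S_m) (k : 'I_m) (A : {set 'I_m}) :
  (#|Rsorted sigma k :&: A| <= k.+1)%N.
Proof.
apply: (leq_trans (subset_leq_card (subsetIl _ _))).
rewrite /Rsorted; apply: (leq_trans (leq_imset_card _ _)).
set B := [set j : 'I_m | (j <= k)%N].
have inj : {in B &, injective (fun j : 'I_m => (inord j : 'I_k.+1))}.
  move=> i j; rewrite !inE => hi hj /(congr1 val) /=.
  by rewrite !inordK ?ltnS // => /val_inj.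
rewrite -(card_in_imset inj).
by apply: (leq_trans (max_card _)); rewrite card_ord.
Qed.

Lemma Rsorted_mem (m : nat) (sigma : 'S_m) (k j : 'I_m) :
  (sigma j \in Rsorted sigma k) = (j <= k)%N.
Proof.
rewrite /Rsorted; apply/imsetP/idP.
  by case=> j'; rewrite inE => h /perm_inj ->.
by move=> h; exists j => //; rewrite inE.
Qed.

Theorem mainTheorem20 (R : realFieldType) (m : nat) (p : 'I_m -> R)
  (sigma : 'S_m)
  (hsorted : forall i j : 'I_m, (i <= j)%N -> p (sigma i) <= p (sigma j))
  (f : R -> R) (S : {set 'I_m}) :
  V_JER (Rsorted sigma) (fun k : 'I_m => Num.min (f (p (sigma k))) (k.+1)%:R) S
    = V_JER (Rsorted sigma) (fun k : 'I_m => f (p (sigma k))) S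
  /\ V_JER (Rsorted sigma) (fun k : 'I_m => f (p (sigma k))) S
    = V_JER (Rdagger p sigma) (fun k : 'I_m => f (p (sigma k))) S.
Proof.
split; rewrite /V_JER; apply: eq_bigl => B; rewrite /JER_adm !inE.
-  apply: eq_forallb => k.
  rewrite le_min ler_nat card_Rsorted_le andbT //.
-  apply/forallP/forallP => H k.
  + have hk : p (sigma k) <= p (sigma k) := lexx _.
    case: (@arg_maxnP _ k (fun j : 'I_m => p (sigma j) <= p (sigma k)) (fun j : 'I_m => val j) hk) => k0 hk0 hmax.
    have hkk0 : (k <= k0)%N by apply: hmax.
    have heq : p (sigma k0) = p (sigma k).
      by apply/eqP; rewrite eq_le hk0 hsorted.
    have -> : Rdagger p sigma k = Rsorted sigma k0.
      apply/setP => i; rewrite -[i](permKV sigma) Rsorted_mem /Rdagger inE.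
      apply/idP/idP => [h|h]; first by apply: hmax.
      by rewrite -heq; apply: hsorted.
    by rewrite -heq; apply: H.
  + apply: le_trans (H k); rewrite ler_nat; apply: subset_leq_card.
    apply: setSI; apply/subsetP => i.
    rewrite -[i](permKV sigma) Rsorted_mem /Rdagger inE; exact: hsorted.
Qed.
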